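(* Let $\mathcal{S}$ be a finite thick generalized quadrangle of order $(s,t)$ with a group $G$ of automorphisms acting regularly on the points. Let $g\in G$ with $g^2\ne 1$, and let $P$ be a point with $P\sim P^g$. Let $\ell_1:=PP^{g^{-1}}$ and $\ell_2:=PP^g$. Then $\ell_1,\ell_2$ are all the lines of $\mathcal{L}_1(g)\cup\mathcal{L}_2(g)$ passing through $P$. Moreover: (1) if $P,P^g,P^{g^{-1}}$ are collinear, then $\ell_1=\ell_2$ and this line lies in $\mathcal{L}_1(g)$; (2) if $P,P^g,P^{g^{-1}}$ are not collinear, then $\ell_1,\ell_2$ are distinct and both lie in $\mathcal{L}_2(g)$.
   Context: A generalized quadrangle of order $(s,t)$: each line has $s+1$ points, each point is on $t+1$ lines, and for each non-incident point-line pair $(P,\ell)$ there is a unique point on $\ell$ collinear with $P$; thick means $\min\{s,t\}\ge2$. $P\sim Q$ means distinct collinear points; for lines, $\ell\sim m$ means distinct concurrent lines. $XY$ denotes the line through distinct collinear points $X,Y$. $\mathcal{L}_1(g)$ is the set of lines fixed by $g$, and $\mathcal{L}_2(g):=\{\ell:\ \ell^g\sim\ell\}$. *)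

(* Defs.v *)
From mathcomp Require Import all_boot all_fingroup.
Set Implicit Arguments. Unset Strict Implicit. Unset Printing Implicit Defensive.
Import GroupScope.

Section GQ.
Variables (Pt Ln : finType) (I : Pt -> Ln -> bool).

Definition collinear (P Q : Pt) : Prop :=
  P != Q /\ exists l, I P l && I Q l.

Definition collinear3 (P Q R : Pt) : Prop :=
  exists l, [&& I P l, I Q l & I R l].

Definition concurrent (l m : Ln) : Prop :=
  l != m /\ exists P, I P l && I P m.

Definition is_GQ (s t : nat) : Prop :=
  [/\ forall l : Ln, #|[set P | I P l]| = s.+1,
      forall P : Pt, #|[set l | I P l]| = t.+1,
      forall (P Q : Pt) (l m : Ln), P != Q -> I P l -> I Q l -> I P m -> I Q m -> l = m
    & forall (P : Pt) (l : Ln), ~~ I P l -> exists! Q : Pt, I Q l /\ collinear P Q].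

Definition is_thick_GQ (s t : nat) : Prop := is_GQ s t /\ 2 <= s /\ 2 <= t.
End GQ.

Section Aut.
Variables (gT : finGroupType) (Pt Ln : finType) (I : Pt -> Ln -> bool).
Variables (G : {group gT}) (toP : {action gT &-> Pt}) (toL : {action gT &-> Ln}).

Definition acts_by_automorphisms : Prop :=
  forall g, g \in G -> forall (P : Pt) (l : Ln), I (toP P g) (toL l g) = I P l.

Definition regular_on_points : Prop :=
  [transitive G, on [set: Pt] | toP] /\ forall P : Pt, 'C_G[P | toP] = 1.

Definition L1 (g : gT) (l : Ln) : Prop := toL l g = l.
Definition L2 (g : gT) (l : Ln) : Prop := concurrent I (toL l g) l.
End Aut.

(* Main.v *)
Require Import Defs.
From mathcomp Require Import all_boot all_fingroup.
Import GroupScope.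

Theorem lemma3p6 (gT : finGroupType) (Pt Ln : finType) (I : Pt -> Ln -> bool)
  (s t : nat) (G : {group gT}) (toP : {action gT &-> Pt}) (toL : {action gT &-> Ln}) :
  is_thick_GQ I s t ->
  acts_by_automorphisms I G toP toL ->
  regular_on_points G toP ->
  forall (g : gT) (P : Pt), g \in G -> g ^+ 2 != 1 ->
  collinear I P (toP P g) ->
  forall l1 l2 : Ln,
    I P l1 -> I (toP P g^-1) l1 ->   (* l1 = P P^{g^-1} *)
    I P l2 -> I (toP P g) l2 ->      (* l2 = P P^g *)
    (forall l : Ln, I P l ->
       ((L1 toL g l \/ L2 I toL g l) <-> (l = l1 \/ l = l2))) /\
    (collinear3 I P (toP P g) (toP P g^-1) -> l1 = l2 /\ L1 toL g l1) /\
    (~ collinear3 I P (toP P g) (toP P g^-1) ->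
       [/\ l1 != l2, L2 I toL g l1 & L2 I toL g l2]).
Proof.
move=> [[_ _ Huniq Hax] _] hA _ g P gG _ [nPg [m /andP[Pm Pgm]]] l1 l2 Pl1 Pil1 Pl2 Pgl2.
have giG : g^-1 \in G by rewrite groupV.
set Pg := toP P g in nPg Pgm Pgl2 *.
set Pi := toP P g^-1 in Pil1 *.
have hPi : toP Pi g = P by rewrite /Pi actKV.
have nPi : P != Pi.
  apply/negP => /eqP E; move: nPg; rewrite /Pg {2}E hPi eqxx //.
have e1 : toL l1 g = l2.
  apply: (Huniq P Pg) => //.
    by rewrite -{1}hPi hA.
  by rewrite /Pg hA.
have Pgl2g : I Pg (toL l2 g) by rewrite /Pg hA.
split; last split.
- move=> l Pl; split.
  + case=> [Hl|[Hne [Q /andP[Qlg Ql]]]].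
      right; apply: (Huniq P Pg) => //; rewrite -Hl /Pg hA //.
    case PlG : (I P (toL l g)).
      left; apply: (Huniq P Pi) => //.
      by rewrite -(hA g gG) hPi.
    right.
    have Pgl : I Pg (toL l g) by rewrite /Pg hA.
    have [Q0 [_ HQ0]] := Hax P (toL l g) (negbT PlG).
    have E1 : Q0 = Pg.
      apply: HQ0; split => //; split; [exact: nPg | exists l2; by rewrite Pl2 Pgl2].
    have E2 : Q0 = Q.
      apply: HQ0; split => //; split.
        by apply/negP => /eqP E; rewrite E Qlg in PlG.
      by exists l; rewrite Pl Ql.
    have QPg : Q = Pg by rewrite -E1 -E2.
    apply: (Huniq P Pg) => //; by rewrite -QPg.
  + case=> ->.
      rewrite /L1 /L2 /concurrent e1.
      case: (eqVneq l2 l1) => [->|ne]; [by left | right; split => //].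
      by exists P; rewrite Pl2 Pl1.
    rewrite /L1 /L2 /concurrent.
    case: (eqVneq (toL l2 g) l2) => [->|ne]; [by left | right; split => //].
    by exists Pg; rewrite Pgl2g Pgl2.
- move=> [n /and3P[Pn Pgn Pin]].
  have E1 : l1 = n by apply: (Huniq P Pi).
  have E2 : l2 = n by apply: (Huniq P Pg).
  split; first by rewrite E1 E2.
  by rewrite /L1 e1 E1 E2.
- move=> NC.
  have ne : l1 != l2.
    apply/negP => /eqP E; apply: NC; exists l1.
    by rewrite Pl1 Pil1 E Pgl2.
  split => //.
    rewrite /L2 /concurrent e1; split; first by rewrite eq_sym.
    by exists P; rewrite Pl2 Pl1.
  rewrite /L2 /concurrent; split.
    apply/negP => /eqP E; move/eqP: ne; apply.
    by rewrite -(actK toL g l1) e1 -{1}E actK.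
  by exists Pg; rewrite Pgl2g Pgl2.
Qed.
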